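(* Let $n\le -1$ be an odd integer. Then $q_n$ has no monic quadratic factor $f\in\mathbb{Z}[w]$ with $f\equiv (w+1)^2\pmod 2$.
   Context: Define $q_n\in\mathbb{Z}[w]$ for odd $n\le -1$ by $q_{-1}=w^3-w^2+2w-7$, $q_{-3}=w^5-2w^4-2w^3+5w^2+3w-9$, $q_{-5}=w^7-2w^6-4w^5+8w^4+4w^3-7w^2+2w-7$, and $q_n=(w^2-1)(q_{n+2}-q_{n+4})+q_{n+6}$ for odd $n<-5$. *)

(* Defs.v *)
From HB Require Import structures.
From mathcomp Require Import all_boot all_order all_algebra.
Set Implicit Arguments. Unset Strict Implicit. Unset Printing Implicit Defensive.
Import Order.TTheory GRing.Theory Num.Theory.
Local Open Scope ring_scope.

Definition q_m1 : {poly int} := 'X^3 - 'X^2 + 2%:P * 'X - 7%:P.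
Definition q_m3 : {poly int} :=
  'X^5 - 2%:P * 'X^4 - 2%:P * 'X^3 + 5%:P * 'X^2 + 3%:P * 'X - 9%:P.
Definition q_m5 : {poly int} :=
  'X^7 - 2%:P * 'X^6 - 4%:P * 'X^5 + 8%:P * 'X^4 + 4%:P * 'X^3
  - 7%:P * 'X^2 + 2%:P * 'X - 7%:P.

(* qtrip k = (Q k, Q (k+1), Q (k+2)) where Q k = q_{-(2k+1)}.
   Recurrence: Q (k+3) = (w^2-1)(Q(k+2) - Q(k+1)) + Q k,
   i.e. q_n = (w^2-1)(q_{n+2} - q_{n+4}) + q_{n+6} with n = -(2k+7). *)
Fixpoint qtrip (k : nat) : {poly int} * {poly int} * {poly int} :=
  match k with
  | 0%N => (q_m1, q_m3, q_m5)
  | k'.+1 =>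
      let: (a, b, c) := qtrip k' in
      (b, c, ('X^2 - 1) * (c - b) + a)
  end.

Definition Qk (k : nat) : {poly int} := (qtrip k).1.1.

(* q_n for odd n <= -1: n = -(2k+1), k = (|n| - 1)/2. *)
Definition q (n : int) : {poly int} := Qk (`|n|%N.-1)./2.

(* Main.v *)
Require Import Defs.
From HB Require Import structures.
From mathcomp Require Import all_boot all_order all_algebra.
From Stdlib Require Import ZArith Lia.
Import Order.TTheory GRing.Theory Num.Theory.
Set Implicit Arguments. Unset Strict Implicit. Unset Printing Implicit Defensive.
Local Open Scope ring_scope.
Notation iter := ssrnat.iter.

Section Gen.
Variable R : pzRingType.
Variables a b : R.
Definition padd (r s : R * R) := (r.1 + s.1, r.2 + s.2).
Definition psub (r s : R * R) := (r.1 - s.1, r.2 - s.2).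
Definition mulw (r : R * R) := (- b * r.2, r.1 - a * r.2).
Definition vs (s : seq R) := foldr (fun c r => padd (mulw r) (c, 0)) (0, 0) s.
Definition st (t : (R * R) * (R * R) * (R * R)) :=
  let: (A, B, C) := t in
  let D := psub C B in (B, C, padd (psub (mulw (mulw D)) D) A).
End Gen.

Section VV.
Variables a b : int.
Definition Mw : 'M[int]_2 :=
  \matrix_(i < 2, j < 2)
    if i == 0 :> nat then (if j == 0 :> nat then 0 else - b)
    else (if j == 0 :> nat then 1 else - a).
Definition i1 : 'I_2 := @Ordinal 2 1 isT.
Definition vv (p : {poly int}) := (horner_mx Mw p ord0 ord0, horner_mx Mw p i1 ord0).

Lemma vvD p r : vv (p + r) = padd (vv p) (vv r).
Proof. by rewrite /vv /padd rmorphD !mxE. Qed.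
Lemma vvB p r : vv (p - r) = psub (vv p) (vv r).
Proof. by rewrite /vv /psub rmorphB !mxE. Qed.
Lemma vvC c : vv c%:P = (c, 0).
Proof. by rewrite /vv horner_mx_C !mxE /=. Qed.

Lemma mul2E (A B : 'M[int]_2) i j : (A *m B) i j = A i ord0 * B ord0 j + A i i1 * B i1 j.
Proof. rewrite mxE !big_ord_recr big_ord0 /= Monoid.simpm. by congr (A i _ * B _ j + A i _ * B _ j); apply: val_inj. Qed.

Lemma mul2M (A B : 'M[int]_2) i j : (A * B) i j = A i ord0 * B ord0 j + A i i1 * B i1 j.
Proof. exact: mul2E. Qed.

Lemma madd (A B : 'M[int]_2) i j : (A + B) i j = A i j + B i j.
Proof. by rewrite mxE. Qed.

Lemma vvX p : vv ('X * p) = mulw a b (vv p).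
Proof.
rewrite /vv /mulw rmorphM /= horner_mx_X !mul2M !mxE /=.
by rewrite mul0r add0r mul1r !mulNr.
Qed.

Lemma vvf g : vv (('X^2 + a%:P * 'X + b%:P) * g) = (0, 0).
Proof.
have H : horner_mx Mw ('X^2 + a%:P * 'X + b%:P) = 0.
  rewrite !rmorphD !rmorphM /= !horner_mx_X !horner_mx_C.
  apply/matrixP => i j; rewrite !madd !mul2M !mxE.
  case: i => [[|[|//]] Hi]; case: j => [[|[|//]] Hj] /=.
  all: rewrite ?(mulr1n, mulr0n, mul0r, mulr0, mul1r, mulr1, add0r, addr0, mulrNN, mulrN, mulNr).
  - by rewrite addNr.
  - by rewrite mulrC subrr.
  - by rewrite addNr.
  - by rewrite addrK addNr.
by rewrite /vv rmorphM /= H mul0r !mxE.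
Qed.
End VV.

Lemma vvPoly a b s : vv a b (Poly s) = vs a b s.
Proof.
elim: s => [|c s IH] /=; first by rewrite vvC.
rewrite (cons_poly_def (Poly s) c) vvD mulrC vvX IH vvC.
by [].
Qed.

Definition s1 : seq int := [:: -7; 2; -1; 1].
Definition s3 : seq int := [:: -9; 3; 5; -2; -2; 1].
Definition s5 : seq int := [:: -7; 2; -7; 4; 8; -4; -2; 1].

Lemma q_m1E : q_m1 = Poly s1.
Proof.
apply/polyP => i; rewrite /q_m1 coef_Poly !coefE.
by case: i => [|[|[|[|[|[|[|[|i]]]]]]]].
Qed.
Lemma q_m3E : q_m3 = Poly s3.
Proof.
apply/polyP => i; rewrite /q_m3 coef_Poly !coefE.
by case: i => [|[|[|[|[|[|[|[|i]]]]]]]].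
Qed.
Lemma q_m5E : q_m5 = Poly s5.
Proof.
apply/polyP => i; rewrite /q_m5 coef_Poly !coefE.
case: i => [|[|[|[|[|[|[|[|i]]]]]]]]; try by [].
by rewrite /= !mulr0 !subr0 nth_nil.
Qed.

Definition vtrip a b (t : {poly int} * {poly int} * {poly int}) :=
  let: (A, B, C) := t in (vv a b A, vv a b B, vv a b C).

Lemma vvW a b D : vv a b (('X^2 - 1) * D) = psub (mulw a b (mulw a b (vv a b D))) (vv a b D).
Proof. by rewrite mulrBl mul1r expr2 -mulrA vvB !vvX. Qed.

Lemma vtripS a b k : vtrip a b (qtrip k.+1) = st a b (vtrip a b (qtrip k)).
Proof.
rewrite /=; case: (qtrip k) => [[A B] C] /=.
by rewrite vvD vvW vvB.
Qed.

Definition init a b := (vs a b s1, vs a b s3, vs a b s5).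

Lemma vtrip_iter a b k : vtrip a b (qtrip k) = iter k (st a b) (init a b).
Proof.
elim: k => [|k IH]; first by rewrite /= /init q_m1E q_m3E q_m5E !vvPoly.
by rewrite vtripS IH.
Qed.

Lemma vvQk a b k : vv a b (Qk k) = (iter k (st a b) (init a b)).1.1.
Proof. by rewrite -vtrip_iter /Qk; case: (qtrip k) => [[A B] C]. Qed.

Section Hom.
Variable S : pzRingType.
Definition hp (r : int * int) : S * S := (r.1%:~R, r.2%:~R).
Definition ht (t : (int * int) * (int * int) * (int * int)) :=
  let: (A, B, C) := t in (hp A, hp B, hp C).

Lemma hp_mulw a b r : hp (mulw a b r) = mulw a%:~R b%:~R (hp r).
Proof. by rewrite /hp /mulw /= intrB !intrM intrN. Qed.
Lemma hp_padd r s : hp (padd r s) = padd (hp r) (hp s).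
Proof. by rewrite /hp /padd /= !intrD. Qed.
Lemma hp_psub r s : hp (psub r s) = psub (hp r) (hp s).
Proof. by rewrite /hp /psub /= !intrB. Qed.

Lemma ht_st a b t : ht (st a b t) = st a%:~R b%:~R (ht t).
Proof.
case: t => [[A B] C] /=.
by rewrite hp_padd hp_psub !hp_mulw hp_psub.
Qed.

Lemma ht_iter a b k t : ht (iter k (st a b) t) = iter k (st a%:~R b%:~R) (ht t).
Proof. by elim: k => [|k IH] //=; rewrite ht_st IH. Qed.

Lemma hp_vs a b s : hp (vs a b s) = vs a%:~R b%:~R (map intr s).
Proof.
elim: s => [|c s IH] /=; first by rewrite /hp /=.
by rewrite hp_padd hp_mulw IH /hp /=.
Qed.
End Hom.

Definition z_of (z : int) : Z :=
  match z with Posz n => Z.of_nat n | Negz n => Z.opp (Z.of_nat n.+1) end.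
Lemma z_ofN x : z_of (- x) = Z.opp (z_of x).
Proof. case: x => [[|n]|n] /=; lia. Qed.
Lemma z_ofD x y : z_of (x + y) = (z_of x + z_of y)%Z.
Proof.
change (x + y) with (intZmod.addz x y).
case: x => m; case: y => n; rewrite /intZmod.addz; try (case: ltnP => /ssrnat.leP h);
  rewrite /z_of -?plusE -?minusE; lia.
Qed.
Lemma z_ofM x y : z_of (x * y) = (z_of x * z_of y)%Z.
Proof.
change (x * y) with (intRing.mulz x y).
case: x => m; case: y => n; rewrite /intRing.mulz ?z_ofN /z_of -?multE; nia.
Qed.
Lemma z_ofB x y : z_of (x - y) = (z_of x - z_of y)%Z.
Proof. by rewrite z_ofD z_ofN. Qed.
Lemma z_of_nat n : z_of (n%:R) = Z.of_nat n.
Proof. by rewrite natz. Qed.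
Lemma z_of_inj : injective z_of.
Proof. move=> [m|m] [n|n] /= h; try lia; congr (_ _); lia. Qed.

Lemma z_of1 : z_of 1 = 1%Z. Proof. by []. Qed.
Lemma z_of0 : z_of 0 = 0%Z. Proof. by []. Qed.
Ltac zint := apply: z_of_inj; rewrite ?(z_ofD, z_ofB, z_ofN, z_ofM, z_of_nat, z_of1, z_of0); lia.

Definition mulwZ (a b : Z) (r : Z * Z) := (- b * r.2, r.1 - a * r.2)%Z.
Definition stZ (a b : Z) (t : (Z * Z) * (Z * Z) * (Z * Z)) :=
  let: (A, B, C) := t in
  let D := (C.1 - B.1, C.2 - B.2)%Z in
  let E := mulwZ a b (mulwZ a b D) in
  (B, C, (E.1 - D.1 + A.1, E.2 - D.2 + A.2)%Z).

Definition Inv (X : (Z * Z) * (Z * Z) * (Z * Z)) : Prop :=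
  let: ((x0, y0), (x1, y1), (x2, y2)) := X in
  (0 < y0 - x0 /\ 0 <= y0 /\ 2 * (y0 - x0) <= y1 - x1 /\ 2 * y0 <= y1 /\
   2 * (y1 - x1) <= y2 - x2 /\ 2 * y1 <= y2)%Z.

Lemma Inv_step X : Inv X -> Inv (stZ 2 (-7) X).
Proof.
case: X => [[[x0 y0] [x1 y1]] [x2 y2]]; rewrite /Inv /stZ /mulwZ;
  cbv beta iota zeta delta [fst snd]; lia.
Qed.

Lemma Inv_iter k X : Inv X -> Inv (iter k (stZ 2 (-7)) X).
Proof. by move=> h; elim: k => [|k IH] //=; apply: Inv_step. Qed.

Lemma Inv_nz X : Inv X -> X.1.1 <> (0%Z, 0%Z).
Proof.
case: X => [[[x0 y0] [x1 y1]] [x2 y2]]; rewrite /Inv;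
  cbv beta iota zeta delta [fst snd] => h [e1 e2]; lia.
Qed.

Definition zp (r : int * int) := (z_of r.1, z_of r.2).
Definition zt (t : (int * int) * (int * int) * (int * int)) :=
  let: (A, B, C) := t in (zp A, zp B, zp C).

Lemma zt_st a b t : zt (st a b t) = stZ (z_of a) (z_of b) (zt t).
Proof.
case: t => [[A B] C]; rewrite /st /stZ /zt /zp /padd /psub /mulw /mulwZ /=.
by rewrite !(z_ofD, z_ofB, z_ofN, z_ofM).
Qed.

Lemma zt_iter a b k t : zt (iter k (st a b) t) = iter k (stZ (z_of a) (z_of b)) (zt t).
Proof. by elim: k => [|k IH] //=; rewrite zt_st IH. Qed.

Lemma growth k : (iter k (st 2 (-7)) (init 2 (-7))).1.1 <> (0, 0).
Proof.
move=> h.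
have hz : (zt (iter k (st 2 (-7)) (init 2 (-7)))).1.1 = (0%Z, 0%Z).
  by case: (iter _ _ _) h => [[A B] C] /= ->.
rewrite zt_iter in hz.
have e2 : z_of 2 = 2%Z by [].
have e7 : z_of (-7) = (-7)%Z by [].
rewrite e2 e7 in hz.
have hi : zt (init 2 (-7)) = ((-28, 15), (-352, 192), (-4424, 2419))%Z by vm_compute.
rewrite hi in hz.
apply: (Inv_nz (Inv_iter k _)) hz.
rewrite /Inv; lia.
Qed.

Delimit Scope int_scope with Z.
Delimit Scope nat_scope with N.

Definition init16 (a b : int) :=
  (vs (a%:~R : 'Z_16) b%:~R (map intr s1), vs (a%:~R : 'Z_16) b%:~R (map intr s3),
   vs (a%:~R : 'Z_16) b%:~R (map intr s5)).
Definition chk (a b : int) : bool :=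
  (iter 24 (st (a%:~R : 'Z_16) b%:~R) (init16 a b) == init16 a b) &&
  all (fun j => (j %% 3 != 1)%nat || ((iter j (st (a%:~R : 'Z_16) b%:~R) (init16 a b)).1.1 != (0, 0)))
      (iota 0 24).

Definition cond (d1 d2 : int) : bool :=
    let a' := ((d1 - d2) %/ 2)%Z in let b' := ((d1 + d2) %/ 2)%Z - 1 in
    [&& (2 %| d1 - d2)%Z, (2 %| a')%Z, ~~ (2 %| b')%Z, (d1 %| -4)%Z, (d2 %| -8)%Z &
        ((a', b') != (2, -7))] ==> chk a' b'.

Definition boxok : bool :=
  all (fun i => all (fun j => cond (i%:Z - 4) (j%:Z - 8)) (iota 0 17)) (iota 0 9).
Lemma boxokT : boxok. Proof. vm_compute. reflexivity. Qed.

Lemma iter_mod (T : Type) (F : T -> T) x P k :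
  iter P F x = x -> iter k F x = iter (k %% P)%N F x.
Proof.
move=> hP; rewrite {1}(divn_eq k P) addnC iterD; congr (iter _ F _).
by elim: (k %/ P)%N => [|m IH] //; rewrite mulSn iterD IH hP.
Qed.

Lemma ht11 (S : pzRingType) t : (ht S t).1.1 = hp S t.1.1.
Proof. by case: t => [[A B] C]. Qed.

Lemma chk_ok a b k : chk a b -> (k %% 3 = 1)%nat ->
  (iter k (st a b) (init a b)).1.1 <> (0, 0).
Proof.
case/andP => /eqP hP /allP hall hk h0.
have := congr1 (hp 'Z_16) h0; rewrite -ht11 ht_iter.
have -> : ht 'Z_16 (init a b) = init16 a b by rewrite /init /ht !hp_vs.
rewrite (iter_mod k hP) /hp /= => e.
have hin : ((k %% 24)%nat \in iota 0 24) by rewrite mem_iota leq0n add0n ltn_pmod.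
have := hall _ hin.
have h3 : ((k %% 24) %% 3 = 1)%nat.
  by have := modn_dvdm k (isT : (3 %| 24)%nat); rewrite hk.
case/orP => [/negP h|/negP h]; first by apply: h; apply/eqP; exact: h3.
by apply: h; apply/eqP; exact: e.
Qed.

Lemma int_box (z : int) (N : nat) : (`|z| <= N)%nat -> exists2 i, (i < N.*2.+1)%nat & z = i%:Z - N%:Z.
Proof.
case: z => n /= h.
  exists (n + N)%nat; first by rewrite ltnS -addnn leq_add2r.
  by rewrite PoszD addrK.
exists (N - n.+1)%nat; first by rewrite ltnS (leq_trans (leq_subr _ _)) // -addnn leq_addr.
move/ssrnat.leP: h => h; apply: z_of_inj; rewrite z_ofB /z_of -?minusE; lia.
Qed.

Lemma box_cond (d1 d2 : int) : (d1 %| -4)%Z -> (d2 %| -8)%Z -> cond d1 d2.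
Proof.
move=> h1 h2.
have b1 : (`|d1| <= 4)%nat by move: h1; rewrite dvdzE => /dvdn_leq; apply.
have b2 : (`|d2| <= 8)%nat by move: h2; rewrite dvdzE => /dvdn_leq; apply.
have [i hi ->] := int_box b1; have [j hj ->] := int_box b2.
have := allP boxokT i; rewrite mem_iota add0n => /(_ hi) /allP /(_ j).
by rewrite mem_iota add0n => /(_ hj); rewrite !natz.
Qed.

Lemma qtripS k : qtrip k.+1 = ((qtrip k).1.2, (qtrip k).2,
  ('X^2 - 1) * ((qtrip k).2 - (qtrip k).1.2) + (qtrip k).1.1).
Proof. by rewrite /=; case: (qtrip k) => [[A B] C]. Qed.

Lemma Qk3 (x : int) (hx : x ^+ 2 = 1) k : (Qk k.+3).[x] = (Qk k).[x].
Proof.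
rewrite /Qk !qtripS /=.
by rewrite hornerD hornerM !hornerE hx subrr mul0r add0r.
Qed.

Lemma Qk_mod (x : int) (hx : x ^+ 2 = 1) k : (Qk k).[x] = (Qk (k %% 3)%N).[x].
Proof.
rewrite {1}(divn_eq k 3); elim: (k %/ 3)%N => [|m IH]; first by rewrite mul0n add0n.
have -> : (m.+1 * 3 + k %% 3 = (m * 3 + k %% 3).+3)%N.
  by rewrite mulSnr -addnA (addnC 3) addnA addn3.
by rewrite Qk3.
Qed.

Lemma Qk0 : Qk 0 = q_m1. Proof. by []. Qed.
Lemma Qk1 : Qk 1 = q_m3. Proof. by []. Qed.
Lemma Qk2 : Qk 2 = q_m5. Proof. by []. Qed.

Lemma ev_m1_1 : q_m1.[1] = -5. Proof. rewrite q_m1E horner_Poly. by vm_compute. Qed.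
Lemma ev_m3_1 : q_m3.[1] = -4. Proof. rewrite q_m3E horner_Poly. by vm_compute. Qed.
Lemma ev_m5_1 : q_m5.[1] = -5. Proof. rewrite q_m5E horner_Poly. by vm_compute. Qed.
Lemma ev_m1_m1 : q_m1.[-1] = -11. Proof. rewrite q_m1E horner_Poly. by vm_compute. Qed.
Lemma ev_m3_m1 : q_m3.[-1] = -8. Proof. rewrite q_m3E horner_Poly. by vm_compute. Qed.
Lemma ev_m5_m1 : q_m5.[-1] = -11. Proof. rewrite q_m5E horner_Poly. by vm_compute. Qed.

Theorem lemma4p4 (n : int) (hn : n <= -1) (hodd : odd `|n|%N)
  (f : {poly int}) (hmonic : f \is monic) (hdeg : size f = 3%N)
  (hmod2 : forall i : nat, (2 %| (f - ('X + 1) ^+ 2)`_i)%Z) :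
  ~ (exists g : {poly int}, q n = f * g).
Proof.
case=> g hg.
set a := f`_1; set b := f`_0.
have fE : f = 'X^2 + a%:P * 'X + b%:P.
  apply/polyP => i; rewrite !coefE.
  have h2 : f`_2 = 1 by move: hmonic; rewrite monicE /lead_coef hdeg => /eqP.
  case: i => [|[|[|i]]] /=; rewrite ?mulr0 ?mulr1 ?addr0 ?add0r //.
  by rewrite nth_default // hdeg.
have ha : (2 %| a - 2)%Z.
  by have := hmod2 1%N; rewrite sqrrD1 !coefE /= ?add0r ?addr0 ?mulr0n.
have hb : (2 %| b - 1)%Z.
  by have := hmod2 0%N; rewrite sqrrD1 !coefE /= ?add0r ?addr0 ?mulr0n.
set k := (`|n|%N.-1)./2.
have hQ : Qk k = f * g by rewrite -hg.
have dv x : (f.[x] %| (Qk k).[x])%Z by rewrite hQ hornerM dvdz_mulr.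
have fx x : f.[x] = x ^+ 2 + a * x + b by rewrite fE !hornerE.
have f1 : f.[1] = (a - 2) + (b - 1) + 2 * 2 by rewrite fx expr1n mulr1; zint.
have fm1 : f.[-1] = (b - 1) - (a - 2) by rewrite fx sqrrN expr1n mulrN1; zint.
have e1 : (2 %| f.[1])%Z.
  rewrite f1; apply: rpredD; first exact: rpredD ha hb.
  by apply: dvdz_mulr; apply: dvdzz.
have em1 : (2 %| f.[-1])%Z by rewrite fm1 rpredB.
have hx1 : (1 : int) ^+ 2 = 1 by rewrite expr1n.
have hxm1 : (-1 : int) ^+ 2 = 1 by rewrite sqrrN expr1n.
have d1 := dv 1; have dm1 := dv (-1).
rewrite (Qk_mod hx1) in d1; rewrite (Qk_mod hxm1) in dm1.
have : (k %% 3 < 3)%N by rewrite ltn_pmod.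
case Hk: (k %% 3)%N => [|[|[|//]]] _; rewrite Hk in d1 dm1.
- by move: dm1; rewrite Qk0 ev_m1_m1 => /(dvdz_trans em1).
- move: d1 dm1; rewrite Qk1 ev_m3_1 ev_m3_m1 => d1 dm1.
  have vv0 : vv a b (Qk k) = (0, 0) by rewrite hQ fE vvf.
  rewrite vvQk in vv0.
  have [eab|neab] := eqVneq (a, b) (2, -7).
    by case: eab => ea eb; move: vv0; rewrite ea eb; move/growth.
  have hc := box_cond d1 dm1.
  have sa : ((f.[1] - f.[-1]) %/ 2)%Z = a.
    have -> : f.[1] - f.[-1] = a * 2 by rewrite f1 fm1; zint.
    by rewrite mulzK.
  have sb : ((f.[1] + f.[-1]) %/ 2)%Z - 1 = b.
    have -> : f.[1] + f.[-1] = (b + 1) * 2 by rewrite f1 fm1; zint.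
    by rewrite mulzK // addrK.
  move: hc; rewrite /cond sa sb => /implyP hc.
  have hch : chk a b.
    apply: hc; apply/and5P; split.
    - have -> : f.[1] - f.[-1] = a * 2 by rewrite f1 fm1; zint.
      by rewrite dvdz_mull.
    - have -> : a = (a - 2) + 2 by zint.
      by rewrite rpredD.
    - apply/negP => h2b.
      have : (2 %| b - (b - 1))%Z by rewrite rpredB.
      by have -> : b - (b - 1) = 1 by zint.
    - exact: d1.
    - by apply/andP; split; [exact: dm1 | exact: neab].
  by apply: (chk_ok hch Hk vv0).
- by move: dm1; rewrite Qk2 ev_m5_m1 => /(dvdz_trans em1).
Qed.
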